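(* Let $p$ be a prime, $s,m$ positive integers, $n=sm$, $c\in\mathbb{F}_{p^s}$, and let $F\in\mathbb{F}_{p^s}[x]$, viewed as a function $\mathbb{F}_{p^n}\to\mathbb{F}_{p^n}$, have $c$-differential uniformity $\delta_{F,c}$. Suppose that no prime $q\leq\delta_{F,c}$ divides $m$. Then for all $a,b\in\mathbb{F}_{p^s}$ (with $a\neq 0$ if $c=1$), the equation $F(x+a)-cF(x)=b$ has no solution $x\in\mathbb{F}_{p^n}\setminus\mathbb{F}_{p^s}$.
   Context: For $F:\mathbb{F}_{p^n}\to\mathbb{F}_{p^n}$ and $c\in\mathbb{F}_{p^n}$, let ${}_c\Delta_F(a,b)=\#\{x\in\mathbb{F}_{p^n}: F(x+a)-cF(x)=b\}$ and the $c$-differential uniformity is $\delta_{F,c}=\max\{{}_c\Delta_F(a,b): a,b\in\mathbb{F}_{p^n},\ a\neq 0\text{ if } c=1\}$. *)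

(* Defs.v *)
From mathcomp Require Import all_boot all_order all_algebra all_field.
Set Implicit Arguments. Unset Strict Implicit. Unset Printing Implicit Defensive.
Import GRing.Theory.
Local Open Scope ring_scope.

(* The subfield F_{p^s} of a finite field L of characteristic p:
   the set of roots of X^(p^s) - X in L. *)
Definition subF (L : finFieldType) (q : nat) : {set L} :=
  [set x : L | x ^+ q == x].

Definition cDelta (L : finFieldType) (F : {poly L}) (c a b : L) : nat :=
  #|[set x : L | F.[x + a] - c * F.[x] == b]|.

Definition cdu (L : finFieldType) (F : {poly L}) (c : L) : nat :=
  \max_(ab : L * L | (c != 1) || (ab.1 != 0)) cDelta F c ab.1 ab.2.

(* Main.v *)
Require Import Defs.
From mathcomp Require Import all_boot all_order all_algebra all_field.
Import GRing.Theory.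
Local Open Scope ring_scope.

Section Aux.
Variables (p : nat) (L : finFieldType).
Hypothesis hchar : p \in [pchar L].

Lemma pk0 k : (p ^ k == 0)%N = false.
Proof. by rewrite expn_eq0 eqn0Ngt prime_gt0 ?(pcharf_prime hchar). Qed.

Lemma powB k (u v : L) : (u - v) ^+ (p ^ k) = u ^+ (p ^ k) - v ^+ (p ^ k).
Proof.
elim: k u v => [|k IH] u v; first by rewrite !expn0 !expr1.
rewrite expnS !exprM.
have -> : (u - v) ^+ p = u ^+ p - v ^+ p.
  by rewrite -!(pFrobenius_autE hchar) pFrobenius_autB_comm //; exact: mulrC.
exact: IH.
Qed.

Lemma powN k (v : L) : (- v) ^+ (p ^ k) = - v ^+ (p ^ k).
Proof. have := powB k 0 v; rewrite sub0r => ->. by rewrite expr0n pk0 sub0r. Qed.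

Lemma powD k (u v : L) : (u + v) ^+ (p ^ k) = u ^+ (p ^ k) + v ^+ (p ^ k).
Proof. by have := powB k u (- v); rewrite opprK => ->; rewrite powN opprK. Qed.

Lemma powsum k n (g : 'I_n -> L) :
  (\sum_(i < n) g i) ^+ (p ^ k) = \sum_(i < n) (g i) ^+ (p ^ k).
Proof.
elim: n g => [|n IH] g; first by rewrite !big_ord0 expr0n pk0.
by rewrite !big_ord_recr /= powD IH.
Qed.

Lemma powpoly k (F : {poly L}) (y : L) :
  (forall i, F`_i ^+ (p ^ k) = F`_i) -> F.[y] ^+ (p ^ k) = F.[y ^+ (p ^ k)].
Proof.
move=> hF; rewrite !horner_coef powsum; apply: eq_bigr => i _.
by rewrite exprMn hF -!exprM mulnC.
Qed.
End Aux.

Theorem proposition2p4 (p s m : nat) (L : finFieldType)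
  (hp : prime p) (hchar : p \in [pchar L]) (hs : (0 < s)%N) (hm : (0 < m)%N)
  (hcard : #|L| = (p ^ (s * m))%N)
  (F : {poly L}) (hF : forall i, F`_i \in subF L (p ^ s))
  (c : L) (hc : c \in subF L (p ^ s))
  (hq : forall q : nat, prime q -> (q <= cdu F c)%N -> ~~ (q %| m)%N) :
  forall a b : L, a \in subF L (p ^ s) -> b \in subF L (p ^ s) ->
    (c = 1 -> a != 0) ->
    forall x : L, x \notin subF L (p ^ s) -> F.[x + a] - c * F.[x] != b.
Proof.
move=> a b ha hb hca x hx; apply/negP => Px.
have fix_ (z : L) : z \in subF L (p ^ s) -> z ^+ (p ^ s) = z.
  by rewrite inE => /eqP.
set f := fun y : L => y ^+ (p ^ s).
pose P := fun y : L => F.[y + a] - c * F.[y] == b.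
have Pf y : P y -> P (f y).
  rewrite /P /f => /eqP Hy; apply/eqP.
  have hF' : forall i, F`_i ^+ (p ^ s) = F`_i by move=> i; apply: fix_.
  rewrite -(fix_ a ha) -(@powD p L hchar) -!(@powpoly p L hchar _ _ _ hF') -(fix_ c hc).
  by rewrite -exprMn -(@powB p L hchar) Hy fix_.
have Pit k : P (iter k f x) by elim: k => [|k IH] //=; apply: Pf.
have itE k y : iter k f y = y ^+ (p ^ (s * k)).
  elim: k => [|k IH]; first by rewrite muln0 expn0 expr1.
  by rewrite iterS IH /f -exprM -expnD mulnS addnC.
have itm y : iter m f y = y by rewrite itE -hcard expf_card.
have finj : injective f.
  apply: (can_inj (g := iter m.-1 f)) => y.
  by rewrite -iterSr prednK // itm.
set o := order f x.
have o_gt0 : (0 < o)%N := order_gt0 f x.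
have itqo q : iter (q * o) f x = x.
  elim: q => [|q IH] //; by rewrite mulSn iterD IH iter_order.
have odvd : (o %| m)%N.
  have r_lt := ltn_pmod m o_gt0.
  have Hr : iter (m %% o) f x = x.
    by rewrite -{2}(itm x) {2}(divn_eq m o) addnC iterD itqo.
  have := findex_iter r_lt; rewrite Hr findex0 => H0.
  by rewrite /dvdn -H0.
have o_neq1 : o != 1%N.
  apply/eqP => o1; move: hx; rewrite inE -/(f x) -[f x]/(iter 1 f x) -o1.
  by rewrite iter_order // eqxx.
have o_le : (o <= cdu F c)%N.
  apply: (@leq_trans (cDelta F c a b)).
    rewrite /cDelta /o -(size_orbit f x) -(card_uniqP (orbit_uniq f x)).
    apply: subset_leq_card; apply/subsetP => y.
    rewrite -fconnect_orbit => /iter_findex <-.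
    by rewrite inE; apply: Pit.
  rewrite /cdu; apply: (leq_bigmax_cond (a, b)) => /=.
  by case: (eqVneq c 1) => //= /hca.
have o_gt1 : (1 < o)%N by rewrite ltn_neqAle eq_sym o_neq1.
have := hq _ (pdiv_prime o_gt1) (leq_trans (pdiv_leq o_gt0) o_le).
by rewrite (dvdn_trans (pdiv_dvd o) odvd).
Qed.
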